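(* Let $Q\subseteq M$ be nonempty with $n=|Q|$, and let $a\in M$ minimize $\mathrm{med}(Q,z)=\sum_{q\in Q}d(q,z)$ over $z\in M$. Let $i\le i_{\mathrm{top}}$ be an integer and $y\in Y_i$ such that $\mathrm{med}(Q,y)\le 3n\,2^{i}$ and $\min_{z\in L_{y,i,7}}\mathrm{med}(Q,z)>3n\,2^{i-1}$. Then $\mathrm{med}(Q,a)>n\,2^{i-1}$, and consequently $\mathrm{med}(Q,y)<6\,\mathrm{med}(Q,a)$.
   Context: $(M,d)$ is a finite metric space with at least two points whose minimum interpoint distance is $1$; let $i_{\mathrm{top}}=\lceil\log_2\operatorname{diam}(M)\rceil$. Net hierarchy: $Y_0=M$, and for $i=1,\dots,i_{\mathrm{top}}$, $Y_i\subseteq Y_{i-1}$ is a $2^i$-net of $Y_{i-1}$, i.e. any two distinct points of $Y_i$ are at distance $\ge 2^i$ and every point of $Y_{i-1}$ is at distance $<2^i$ from some point of $Y_i$. By convention $Y_i=M$ for all integers $i<0$. For $y\in Y_i$ and $c\ge1$, the $c$-list is $L_{y,i,c}=\{z\in Y_{i-1}: d(y,z)\le c\,2^i\}$. *)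

(* Defs.v *)
From HB Require Import structures.
From mathcomp Require Import all_boot all_order all_algebra.
Set Implicit Arguments. Unset Strict Implicit. Unset Printing Implicit Defensive.
Import Order.TTheory GRing.Theory Num.Theory.
Local Open Scope ring_scope.

Definition finite_metric_min1 (R : realFieldType) (T : finType) (d : T -> T -> R) : Prop :=
  [/\ (forall x, d x x = 0),
      (forall x y, d x y = d y x),
      (forall x y z, d x z <= d x y + d y z),
      (forall x y, x != y -> 1 <= d x y)
    & (exists x y, x != y /\ d x y = 1)].

(* diam(M) = max of distances (all distances are >= 0). *)
Definition diam (R : realFieldType) (T : finType) (d : T -> T -> R) : R :=
  \big[Num.max/0]_(p : T * T) d p.1 p.2.

Definition is_ceil_log2 (R : realFieldType) (D : R) (k : int) : Prop :=
  (2 : R) ^ (k - 1) < D <= (2 : R) ^ k.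

Definition net_hierarchy (R : realFieldType) (T : finType) (d : T -> T -> R)
    (itop : int) (Y : int -> {set T}) : Prop :=
  (forall i : int, i <= 0 -> Y i = [set: T]) /\
  (forall i : int, 1 <= i <= itop ->
     [/\ Y i \subset Y (i - 1),
         (forall x y, x \in Y i -> y \in Y i -> x != y -> (2 : R) ^ i <= d x y)
       & (forall x, x \in Y (i - 1) -> exists2 z, z \in Y i & d x z < (2 : R) ^ i)]).

Definition clist (R : realFieldType) (T : finType) (d : T -> T -> R)
    (Y : int -> {set T}) (y : T) (i : int) (c : R) : {set T} :=
  [set z in Y (i - 1) | d y z <= c * (2 : R) ^ i].

Definition med (R : realFieldType) (T : finType) (d : T -> T -> R)
    (Q : {set T}) (z : T) : R :=
  \sum_(q in Q) d q z.

(* Main.v *)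
Require Import Defs.
From HB Require Import structures.
From mathcomp Require Import all_boot all_order all_algebra.
From mathcomp Require Import ring lra.
Import Order.TTheory GRing.Theory Num.Theory.
Local Open Scope ring_scope.

Lemma chain_lemma (R : realFieldType) (T : finType) (d : T -> T -> R)
    (itop : int) (Y : int -> {set T}) :
  (forall x, d x x = 0) ->
  (forall x y z, d x z <= d x y + d y z) ->
  net_hierarchy d itop Y ->
  forall (k : nat) x, (k%:Z <= itop) ->
  exists2 z, z \in Y k%:Z & d x z <= (2:R) ^+ k.+1 - 2.
Proof.
move=> d0 tri [H0 H1]; elim=> [|k IH] x hk.
  by exists x; rewrite ?H0 // d0 expr1 subrr.
have hk' : k%:Z <= itop by apply: le_trans hk; rewrite lez_nat.
have [z zY dz] := IH x hk'.
have hr : 1 <= k.+1%:Z <= itop by rewrite hk andbT lez_nat.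
have [_ _ Hn] := H1 _ hr.
have e : (k.+1%:Z - 1) = k%:Z by rewrite -addn1 PoszD addrK.
rewrite e in Hn.
have [w wY dw] := Hn z zY.
exists w => //.
have e2 : (2:R) ^ k.+1%:Z = 2 ^+ k.+1 by [].
rewrite e2 in dw.
have := tri x z w.
rewrite (exprS _ k.+1).
lra.
Qed.

Lemma med_bound (R : realFieldType) (T : finType) (d : T -> T -> R) (Q : {set T}) a z :
  (forall x y z, d x z <= d x y + d y z) ->
  med d Q z <= med d Q a + #|Q|%:R * d a z.
Proof.
move=> tri; rewrite /med mulr_natl -sumr_const -big_split /=.
by apply: ler_sum => q _; apply: tri.
Qed.

Lemma dist_bound (R : realFieldType) (T : finType) (d : T -> T -> R) (Q : {set T}) a y :
  (forall x y z, d x z <= d x y + d y z) -> (forall x y, d x y = d y x) ->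
  #|Q|%:R * d y a <= med d Q y + med d Q a.
Proof.
move=> tri sym; rewrite /med mulr_natl -sumr_const -big_split /=.
by apply: ler_sum => q _; rewrite (sym q y); apply: tri.
Qed.

Theorem mainTheorem5 (R : realFieldType) (T : finType) (d : T -> T -> R)
    (itop : int) (Y : int -> {set T}) (Q : {set T}) (a y : T) (i : int) :
  finite_metric_min1 d ->
  is_ceil_log2 (diam d) itop ->
  net_hierarchy d itop Y ->
  Q != set0 ->
  (forall z, med d Q a <= med d Q z) ->
  i <= itop ->
  y \in Y i ->
  med d Q y <= 3 * #|Q|%:R * (2 : R) ^ i ->
  (forall z, z \in clist d Y y i 7 -> 3 * #|Q|%:R * (2 : R) ^ (i - 1) < med d Q z) ->
  #|Q|%:R * (2 : R) ^ (i - 1) < med d Q a /\ med d Q y < 6 * med d Q a.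
Proof.
move=> [d0 sym tri _ _] _ NH Qn0 amin hi yY hy hL.
set N : R := #|Q|%:R.
have Npos : 0 < N by rewrite /N ltr0n card_gt0.
set p : R := 2 ^ (i - 1).
have ppos : 0 < p by rewrite /p exprz_gt0.
have e2 : (2:R) ^ i = 2 * p.
  have u2 : (2:R) \is a GRing.unit by rewrite unitfE pnatr_eq0.
  have := exprzDr u2 (i - 1) 1; rewrite subrK => ->.
  by rewrite expr1z mulrC.
rewrite e2 in hy.
have first : N * p < med d Q a.
  rewrite ltNge; apply/negP => ha.
  have [z zY dz] : exists2 z, z \in Y (i - 1) & d a z < 2 * p.
    case: (lerP (i - 1) 0) => hi0.
      by exists a; rewrite ?(proj1 NH) // d0 mulr_gt0.
    have [k ek] : exists k : nat, i - 1 = k%:Z.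
      by exists `|i - 1|%N; rewrite gez0_abs // ltW.
    have hk : k%:Z <= itop by rewrite -ek; apply: le_trans hi; rewrite gerDl.
    have [z zY dz] := @chain_lemma R T d itop Y d0 tri NH k a hk.
    exists z; first by rewrite ek.
    have : (2:R) ^+ k.+1 = 2 * p by rewrite /p ek exprS.
    lra.
  have hdy := @dist_bound R T d Q a y tri sym.
  have hmz := @med_bound R T d Q a z tri.
  have hya : d y a <= 7 * p.
    rewrite -(ler_pM2l Npos).
    have : N * (7 * p) = 3 * N * (2 * p) + N * p by ring.
    lra.
  have hzc : z \in clist d Y y i 7.
    rewrite inE zY /= e2.
    have := tri y a z. lra.
  have := hL z hzc.
  have : N * d a z <= N * (2 * p) by rewrite ler_pM2l // ltW.
  rewrite -/p -/N. lra.
split => //.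
have : 3 * N * (2 * p) = 6 * (N * p) by ring.
lra.
Qed.
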